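(* Let $m$ be a positive integer and $\gamma\in C^m(\mathbb{R},\mathbb{R}^3)$. For every $p\in\mathbb{H}$ and all $a,b\in\mathbb{R}$, $$A(p*\gamma;a,b)=A(\gamma;a,b)\quad\text{and}\quad V(p*\gamma;a,b)=V(\gamma;a,b),$$ where $p*\gamma$ is the curve $t\mapsto p*\gamma(t)$.
   Context: $\mathbb{H}$ is $\mathbb{R}^3$ with group law $(x,y,z)*(x',y',z')=(x+x',\,y+y',\,z+z'+2(yx'-xy'))$. $C^m(\mathbb{R},\mathbb{R}^3)$: curves whose components are $m$-times continuously differentiable with bounded $m$th derivative. For $\gamma=(f,g,h)\in C^m(\mathbb{R},\mathbb{R}^3)$ and $a\in\mathbb{R}$, $T_af(x)=\sum_{k=0}^m\frac{f^{(k)}(a)}{k!}(x-a)^k$ (similarly $T_ag$), and for $a,b\in\mathbb{R}$: $A(\gamma;a,b)= h(b)-h(a)-2\int_a^b\big((T_af)'T_ag-(T_ag)'T_af\big) + 2f(a)(g(b)-T_ag(b)) - 2g(a)(f(b)-T_af(b))$, $V(\gamma;a,b)=(b-a)^{2m}+(b-a)^m\int_a^b(|(T_af)'|+|(T_ag)'|)$. *)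

(* Defs.v *)
From Stdlib Require Import Reals.
From Coquelicot Require Import Coquelicot.
Open Scope R_scope.

Definition hmul (p q : R * R * R) : R * R * R :=
  let '(x, y, z) := p in let '(x', y', z') := q in
  (x + x', y + y', z + z' + 2 * (y * x' - x * y')).

Definition cx (gamma : R -> R * R * R) : R -> R := fun t => fst (fst (gamma t)).
Definition cy (gamma : R -> R * R * R) : R -> R := fun t => snd (fst (gamma t)).
Definition cz (gamma : R -> R * R * R) : R -> R := fun t => snd (gamma t).

Definition Cm_fun (m : nat) (f : R -> R) : Prop :=
  (forall k x, (k <= m)%nat -> ex_derive_n f k x) /\
  (forall x, continuous (Derive_n f m) x) /\
  (exists M, forall x, Rabs (Derive_n f m x) <= M).

Definition Cm_curve (m : nat) (gamma : R -> R * R * R) : Prop :=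
  Cm_fun m (cx gamma) /\ Cm_fun m (cy gamma) /\ Cm_fun m (cz gamma).

Definition taylor (m : nat) (f : R -> R) (a : R) : R -> R :=
  fun x => sum_f_R0 (fun k => Derive_n f k a / INR (Factorial.fact k) * (x - a) ^ k) m.

Definition Aq (m : nat) (gamma : R -> R * R * R) (a b : R) : R :=
  let f := cx gamma in let g := cy gamma in let h := cz gamma in
  let Tf := taylor m f a in let Tg := taylor m g a in
  h b - h a
  - 2 * RInt (fun x => Derive Tf x * Tg x - Derive Tg x * Tf x) a b
  + 2 * f a * (g b - Tg b) - 2 * g a * (f b - Tf b).

Definition Vq (m : nat) (gamma : R -> R * R * R) (a b : R) : R :=
  let Tf := taylor m (cx gamma) a in let Tg := taylor m (cy gamma) a in
  (b - a) ^ (2 * m)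
  + (b - a) ^ m * RInt (fun x => Rabs (Derive Tf x) + Rabs (Derive Tg x)) a b.

Definition htranslate (p : R * R * R) (gamma : R -> R * R * R) : R -> R * R * R :=
  fun t => hmul p (gamma t).

(* Main.v *)
Require Import Defs.
From Stdlib Require Import Reals Lra Lia FunctionalExtensionality.
From Coquelicot Require Import Coquelicot.
Open Scope R_scope.

Lemma Derive_cplus (c : R) (f : R -> R) x :
  Derive (fun t => c + f t) x = Derive f x.
Proof.
  unfold Derive. f_equal. apply Lim_ext. intros y. f_equal. ring.
Qed.

Lemma Derive_n_cplus (c : R) (f : R -> R) k x :
  Derive_n (fun t => c + f t) (S k) x = Derive_n f (S k) x.
Proof.
  revert x; induction k as [|k IH]; intros x.
  - simpl. apply Derive_cplus.
  - simpl. apply Derive_ext. intros t. apply IH.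
Qed.

Lemma taylor_cplus m c f a x :
  taylor m (fun t => c + f t) a x = c + taylor m f a x.
Proof.
  unfold taylor. induction m as [|m IH].
  - simpl. field.
  - simpl sum_f_R0. rewrite IH. rewrite (Derive_n_cplus c f m a : Derive (Derive_n _ m) a = Derive (Derive_n f m) a). ring.
Qed.

Lemma taylor_at m f a : taylor m f a a = f a.
Proof.
  unfold taylor. induction m as [|m IH].
  - simpl. field.
  - simpl sum_f_R0. rewrite IH. replace (a - a) with 0 by ring.
    simpl. ring.
Qed.

Lemma poly_deriv (c : nat -> R) a n x :
  is_derive (fun x => sum_f_R0 (fun k => c k * (x - a) ^ k) n) x
    (sum_f_R0 (fun k => c k * (INR k * (x - a) ^ (pred k))) n).
Proof.
  induction n as [|n IH].
  - simpl. auto_derive; auto. ring.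
  - simpl sum_f_R0. apply (is_derive_plus _ (fun x => c (S n) * (x - a) ^ S n)).
    + exact IH.
    + auto_derive; auto. simpl pred. unfold Rminus. rewrite Rmult_1_l. reflexivity.
Qed.

Lemma sum_cont (F : nat -> R -> R) n x :
  (forall k, continuous (F k) x) -> continuous (fun t => sum_f_R0 (fun k => F k t) n) x.
Proof.
  intros H. induction n as [|n IH].
  - simpl. apply H.
  - simpl. apply (continuous_plus (fun t => sum_f_R0 (fun k => F k t) n) (F (S n))); auto.
Qed.

Lemma taylor_props m f a :
  (forall x, ex_derive (taylor m f a) x) /\
  (forall x, continuous (taylor m f a) x) /\
  (forall x, continuous (Derive (taylor m f a)) x).
Proof.
  set (c := fun k => Derive_n f k a / INR (Factorial.fact k)).
  assert (HD : forall x, is_derive (taylor m f a) x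
    (sum_f_R0 (fun k => c k * (INR k * (x - a) ^ (pred k))) m)).
  { intros x. apply (poly_deriv c a m x). }
  split; [|split].
  - intros x. eexists. apply HD.
  - intros x. apply (ex_derive_continuous (taylor m f a)). eexists. apply HD.
  - intros x.
    apply (continuous_ext (fun x => sum_f_R0 (fun k => c k * (INR k * (x - a) ^ (pred k))) m)).
    + intros t. symmetry. apply is_derive_unique. apply HD.
    + apply (sum_cont (fun k t => c k * (INR k * (t - a) ^ (pred k)))).
      intros k. apply (ex_derive_continuous (fun t => c k * (INR k * (t - a) ^ (pred k)))). auto_derive. auto.
Qed.

Lemma cx_tr p g : cx (htranslate p g) = fun t => fst (fst p) + cx g t.
Proof.
  apply functional_extensionality; intros t. unfold cx, htranslate, hmul.
  destruct p as [[x y] z]; destruct (g t) as [[u v] w]; reflexivity.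
Qed.
Lemma cy_tr p g : cy (htranslate p g) = fun t => snd (fst p) + cy g t.
Proof.
  apply functional_extensionality; intros t. unfold cy, htranslate, hmul.
  destruct p as [[x y] z]; destruct (g t) as [[u v] w]; reflexivity.
Qed.
Lemma cz_tr p g t : cz (htranslate p g) t =
  snd p + cz g t + 2 * (snd (fst p) * cx g t - fst (fst p) * cy g t).
Proof.
  unfold cz, cx, cy, htranslate, hmul.
  destruct p as [[x y] z]; destruct (g t) as [[u v] w]; reflexivity.
Qed.

Theorem lemma3p3 (m : nat) (Hm : (0 < m)%nat) (gamma : R -> R * R * R)
  (Hgamma : Cm_curve m gamma) (p : R * R * R) (a b : R) :
  Aq m (htranslate p gamma) a b = Aq m gamma a b /\
  Vq m (htranslate p gamma) a b = Vq m gamma a b.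
Proof.
  set (x0 := fst (fst p)). set (y0 := snd (fst p)).
  set (f := cx gamma). set (g := cy gamma).
  assert (ETf : forall t, taylor m (cx (htranslate p gamma)) a t = x0 + taylor m f a t).
  { intros t. rewrite cx_tr. apply taylor_cplus. }
  assert (ETg : forall t, taylor m (cy (htranslate p gamma)) a t = y0 + taylor m g a t).
  { intros t. rewrite cy_tr. apply taylor_cplus. }
  assert (EDf : forall t, Derive (taylor m (cx (htranslate p gamma)) a) t = Derive (taylor m f a) t).
  { intros t. rewrite (Derive_ext _ _ t ETf). apply Derive_cplus. }
  assert (EDg : forall t, Derive (taylor m (cy (htranslate p gamma)) a) t = Derive (taylor m g a) t).
  { intros t. rewrite (Derive_ext _ _ t ETg). apply Derive_cplus. }
  destruct (taylor_props m f a) as [Fd [Fc FDc]].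
  destruct (taylor_props m g a) as [Gd [Gc GDc]].
  split.
  - assert (HexF : ex_RInt (Derive (taylor m f a)) a b).
    { apply (@ex_RInt_continuous R_CompleteNormedModule). intros; auto. }
    assert (HexG : ex_RInt (Derive (taylor m g a)) a b).
    { apply (@ex_RInt_continuous R_CompleteNormedModule). intros; auto. }
    assert (Hex1 : ex_RInt (fun x =>
        Derive (taylor m f a) x * taylor m g a x - Derive (taylor m g a) x * taylor m f a x) a b).
    { apply (@ex_RInt_continuous R_CompleteNormedModule). intros z _.
      apply (continuous_minus (fun x => Derive (taylor m f a) x * taylor m g a x)
                              (fun x => Derive (taylor m g a) x * taylor m f a x));
      apply (continuous_mult (fun x => Derive _ x)); auto. }
    assert (EI : RInt (fun x => Derive (taylor m (cx (htranslate p gamma)) a) x * taylor m (cy (htranslate p gamma)) a x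
                 - Derive (taylor m (cy (htranslate p gamma)) a) x * taylor m (cx (htranslate p gamma)) a x) a b
          = RInt (fun x =>
        Derive (taylor m f a) x * taylor m g a x - Derive (taylor m g a) x * taylor m f a x) a b
            + (y0 * (taylor m f a b - taylor m f a a) - x0 * (taylor m g a b - taylor m g a a))).
    { apply is_RInt_unique.
      apply (is_RInt_ext (fun x => plus
        (Derive (taylor m f a) x * taylor m g a x - Derive (taylor m g a) x * taylor m f a x)
        (minus (scal y0 (Derive (taylor m f a) x)) (scal x0 (Derive (taylor m g a) x))))).
      { intros x _. rewrite EDf, EDg, ETf, ETg.
        unfold plus, minus, scal, opp; simpl. unfold mult, plus, opp; simpl. ring. }
      apply (@is_RInt_plus R_NormedModule).
      { apply (RInt_correct _ _ _ Hex1). }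
      apply (@is_RInt_minus R_NormedModule); apply (@is_RInt_scal R_NormedModule);
        apply (@is_RInt_derive R_CompleteNormedModule); intros; auto;
        apply Derive_correct; auto. }
    unfold Aq. rewrite EI. rewrite !cz_tr. rewrite !ETf, !ETg.
    rewrite !taylor_at. rewrite cx_tr, cy_tr. cbv beta. fold x0 y0 f g.
    ring.
  - unfold Vq. f_equal. f_equal. apply RInt_ext. intros x _. rewrite EDf, EDg. reflexivity.
Qed.
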